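(* Let $q$ be a prime power, $V$ an $n$-dimensional $\mathbb{F}_q$-vector space and $k\ge1$. The simplicial complex $\Delta(V^*,k)$ is a matroid complex.
   Context: Let $\mathcal{L}$ be the set of lines (1-dimensional subspaces) of $V^*$. $\Delta(V^*,k)$ is the simplicial complex on the vertex set $\mathcal{L}\sqcup\cdots\sqcup\mathcal{L}$ ($k$ disjoint copies) whose faces are the sets $(\mathcal{L}\setminus F_1)\sqcup\cdots\sqcup(\mathcal{L}\setminus F_k)$ with $F_1,\dots,F_k\subseteq\mathcal{L}$ such that $F_1\cup\cdots\cup F_k$ linearly spans $V^*$. A matroid complex is a simplicial complex satisfying the exchange property: if $F,G$ are faces with $|F|<|G|$, there is $v\in G\setminus F$ with $F\cup\{v\}$ a face. *)

(* Defs.v *)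
From HB Require Import structures.
From mathcomp Require Import all_boot all_order all_algebra all_field.
Set Implicit Arguments. Unset Strict Implicit. Unset Printing Implicit Defensive.
Import GRing.Theory.
Local Open Scope ring_scope.

(* V^* (the dual of an n-dimensional F-vector space) is modelled as 'rV[F]_n. *)

Definition lines (F : finFieldType) (n : nat) : {set {set 'rV[F]_n}} :=
  [set [set c *: v | c : F] | v in [set v : 'rV[F]_n | v != 0]].

Definition spans (F : finFieldType) (n : nat) (U : {set {set 'rV[F]_n}}) : Prop :=
  forall v : 'rV[F]_n, exists c : 'rV[F]_n -> F,
    v = \sum_(w : 'rV[F]_n | [exists l in U, w \in l]) c w *: w.

(* Vertices of Delta(V^*, k): k disjoint copies of the set of lines,
   encoded as pairs (copy index, line). *)
Definition vtx (F : finFieldType) (n k : nat) : finType :=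
  ('I_k * {set 'rV[F]_n})%type.

Definition Delta_face (F : finFieldType) (n k : nat) (S : {set vtx F n k}) : Prop :=
  exists Fs : 'I_k -> {set {set 'rV[F]_n}},
    (forall i, Fs i \subset lines F n) /\
    spans (\bigcup_(i < k) Fs i) /\
    S = [set x : vtx F n k | (x.2 \in lines F n) && (x.2 \notin Fs x.1)].

Definition matroid_complex (T : finType) (face : {set T} -> Prop) : Prop :=
  face set0 /\
  (forall A B : {set T}, face A -> B \subset A -> face B) /\
  (forall A B : {set T}, face A -> face B -> #|A| < #|B| ->
     exists v, v \in B :\: A /\ face (v |: A))%N.

(* Main.v *)
Require Import Defs.
From HB Require Import structures.
From mathcomp Require Import all_boot all_order all_algebra all_field.
From mathcomp Require Import zify.
Set Implicit Arguments. Unset Strict Implicit. Unset Printing Implicit Defensive.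
Import GRing.Theory.
Local Open Scope ring_scope.

Definition lineM (F : finFieldType) n (l : {set 'rV[F]_n}) : 'M[F]_n :=
  (\sum_(w in l) <<w>>)%MS.
Definition sp (F : finFieldType) n (U : {set {set 'rV[F]_n}}) : 'M[F]_n :=
  (\sum_(w | [exists l in U, w \in l]) <<w>>)%MS.
Definition WL (F : finFieldType) n (U : {set {set 'rV[F]_n}}) : 'M[F]_n :=
  (\sum_(l in U) lineM l)%MS.
Definition WV (F : finFieldType) n k (Y : {set vtx F n k}) : 'M[F]_n :=
  (\sum_(x in Y) lineM x.2)%MS.

Lemma spansP (F : finFieldType) n (U : {set {set 'rV[F]_n}}) :
  spans U <-> row_full (sp U).
Proof.
split.
- move=> H; rewrite -sub1mx; apply/row_subP => i.
  have [c ->] := H (row i 1%:M).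
  apply: summx_sub => w Pw; apply: scalemx_sub.
  by apply: (sumsmx_sup w) => //; rewrite genmxE.
- move=> H v.
  have : (v <= sp U)%MS by rewrite (submx_trans (submx1 v)) // sub1mx.
  case/sub_sums_genmxP => u ->; exists (fun w => u w 0 0).
  by apply: eq_bigr => w _; rewrite {1}[u w]mx11_scalar mul_scalar_mx.
Qed.

Lemma sp_WL (F : finFieldType) n (U : {set {set 'rV[F]_n}}) :
  row_full (sp U) = row_full (WL U).
Proof.
rewrite -!sub1mx; apply/idP/idP => H; apply: (submx_trans H).
- apply/sumsmx_subP => w /existsP[l /andP[lU wl]].
  by apply: (sumsmx_sup l) => //; apply: (sumsmx_sup w).
- apply/sumsmx_subP => l lU; apply/sumsmx_subP => w wl.
  by apply: (sumsmx_sup w) => //; apply/existsP; exists l; rewrite lU.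
Qed.

Lemma WL_WV (F : finFieldType) n k (Y : {set vtx F n k}) :
  row_full (WL [set x.2 | x in Y]) = row_full (WV Y).
Proof.
rewrite -!sub1mx; apply/idP/idP => H; apply: (submx_trans H).
- apply/sumsmx_subP => l /imsetP[x xY ->].
  by apply: (sumsmx_sup x).
- apply/sumsmx_subP => x xY.
  by apply: (sumsmx_sup x.2) => //; apply: imset_f.
Qed.

Lemma spans_WV (F : finFieldType) n k (Y : {set vtx F n k}) :
  spans [set x.2 | x in Y] <-> row_full (WV Y).
Proof. by rewrite -WL_WV -sp_WL; apply: spansP. Qed.

Definition Ev (F : finFieldType) n k : {set vtx F n k} :=
  [set x : vtx F n k | x.2 \in lines F n].

Lemma faceP (F : finFieldType) n k (S : {set vtx F n k}) :
  Delta_face S <-> S \subset Ev F n k /\ row_full (WV (Ev F n k :\: S)).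
Proof.
split.
- move=> [Fs [HF [Hs ->]]]; split.
    by apply/subsetP => x; rewrite !inE => /andP[].
  apply: (proj1 (spans_WV _)).
  suff -> : [set x.2 | x in Ev F n k :\: [set x : vtx F n k | (x.2 \in lines F n) && (x.2 \notin Fs x.1)]]
     = \bigcup_(i < k) Fs i by [].
  apply/setP => l; apply/imsetP/bigcupP.
  + move=> [x]; rewrite !inE => /andP[+ H2] ->; rewrite H2 /= negbK => H1.
    by exists x.1.
  + move=> [i _ li]; exists (i, l) => //.
    have ll : l \in lines F n by apply: (subsetP (HF i)).
    by rewrite !inE /= ll li.
- move=> [sub full].
  exists (fun i => [set l in lines F n | (i, l) \notin S]); split.
    by move=> i; apply/subsetP => l; rewrite inE => /andP[].
  split.
    suff <- : [set x.2 | x in Ev F n k :\: S] =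
      \bigcup_(i < k) [set l in lines F n | (i, l) \notin S].
      exact: (proj2 (spans_WV _) full).
    apply/setP => l; apply/imsetP/bigcupP.
    + move=> [[i l']]; rewrite !inE /= => /andP[H1 H2] ->.
      by exists i => //; rewrite inE H1 H2.
    + move=> [i _]; rewrite inE => /andP[H1 H2]; exists (i, l) => //.
      by rewrite !inE /= H1 H2.
  apply/setP => x; rewrite !inE.
  have -> : (x.1, x.2) = x by case: x.
  case xS: (x \in S) => /=.
    by have := subsetP sub x xS; rewrite inE => ->.
  by rewrite andbT andbN.
Qed.


Lemma WV_mono (F : finFieldType) n k (Y Z : {set vtx F n k}) :
  Y \subset Z -> (WV Y <= WV Z)%MS.
Proof.
move=> sYZ; apply/sumsmx_subP => x xY.
by apply: (sumsmx_sup x) => //; apply: (subsetP sYZ).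
Qed.

Lemma WV_split (F : finFieldType) n k (Y : {set vtx F n k}) v :
  (WV Y <= lineM v.2 + WV (Y :\ v))%MS.
Proof.
apply/sumsmx_subP => x xY.
case: (eqVneq x v) => [->|xv]; first exact: addsmxSl.
apply: submx_trans (addsmxSr _ _).
by apply: (sumsmx_sup x) => //; rewrite !inE xv.
Qed.

Lemma lineM_rank (F : finFieldType) n (l : {set 'rV[F]_n}) :
  l \in lines F n -> (\rank (lineM l) <= 1)%N.
Proof.
move=> /imsetP[v _ ->].
have : (lineM [set c *: v | c : F] <= v)%MS.
  apply/sumsmx_subP => w /imsetP[c _ ->].
  by rewrite genmxE; apply: scalemx_sub.
by move/mxrankS/leq_trans; apply; apply: rank_leq_row.
Qed.

Lemma WV_rank (F : finFieldType) n k (Y : {set vtx F n k}) :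
  Y \subset Ev F n k -> (\rank (WV Y) <= #|Y|)%N.
Proof.
move=> sY; rewrite -sum1_card /WV.
elim/big_rec2: _ => [|x r M xY IH]; first by rewrite mxrank0.
apply: leq_trans (mxrank_adds_leqif _ _) _.
apply: leq_add => //; apply: lineM_rank.
by have := subsetP sY x xY; rewrite inE.
Qed.

Lemma WV_rankU (F : finFieldType) n k (Y Z : {set vtx F n k}) :
  Z \subset Ev F n k -> (\rank (WV (Y :|: Z)) <= \rank (WV Y) + #|Z|)%N.
Proof.
move=> sZ.
have : (WV (Y :|: Z) <= WV Y + WV Z)%MS.
  apply/sumsmx_subP => x; rewrite inE => /orP[xY|xZ].
    by apply: submx_trans (addsmxSl _ _); apply: (sumsmx_sup x).
  by apply: submx_trans (addsmxSr _ _); apply: (sumsmx_sup x).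
move/mxrankS/leq_trans; apply; apply: leq_trans (mxrank_adds_leqif _ _) _.
by rewrite leq_add2l WV_rank.
Qed.

Lemma strict_drop (F : finFieldType) n k (X Y : {set vtx F n k}) v :
  row_full (WV X) -> ~~ row_full (WV (X :\ v)) -> Y \subset X -> v \in Y ->
  (\rank (WV (Y :\ v)) < \rank (WV Y))%N.
Proof.
move=> fX nfX sYX vY; apply: rank_ltmx.
rewrite /ltmx WV_mono ?subsetDl //=; apply/negP => H.
move: nfX; rewrite -sub1mx; apply/negP/negPn.
rewrite -sub1mx in fX; apply: (submx_trans fX).
apply: submx_trans (WV_split X v) _.
rewrite addsmx_sub submx_refl andbT.
have : (lineM v.2 <= WV Y)%MS by apply: (sumsmx_sup v).
move/submx_trans; apply; apply: (submx_trans H).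
by apply: WV_mono; apply: setSD.
Qed.

Lemma coloop_count (F : finFieldType) n k (X D : {set vtx F n k}) :
  row_full (WV X) ->
  (forall v, v \in D -> (v \in X) && ~~ row_full (WV (X :\ v))) ->
  (\rank (WV (X :\: D)) + #|D| <= n)%N.
Proof.
move=> fX; have [m] := ubnP #|D|; elim: m D => // m IH D hD HD.
case: (set_0Vmem D) => [->|[v vD]].
  by rewrite cards0 addn0 rank_leq_col.
have /andP[vX nf] := HD v vD.
have hD' : (#|D :\ v| < m)%N by move: hD; rewrite (cardsD1 v D) vD.
have HD' : forall w, w \in D :\ v -> (w \in X) && ~~ row_full (WV (X :\ w)).
  by move=> w; rewrite inE => /andP[_]; apply: HD.
have := IH _ hD' HD'.
have eq : X :\: D = (X :\: (D :\ v)) :\ v.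
  apply/setP => x; rewrite !inE; case: (eqVneq x v) => [->|] //=.
  by rewrite vD.
have vY : v \in X :\: (D :\ v) by rewrite !inE eqxx vX.
have lt := strict_drop fX nf (subsetDl _ _) vY.
rewrite (cardsD1 v D) vD eq; move: lt; lia.
Qed.

Lemma Ev_full (F : finFieldType) n k (hk : (1 <= k)%N) :
  row_full (WV (Ev F n k)).
Proof.
rewrite -sub1mx; apply/row_subP => i; set v := row i _.
case: (eqVneq v 0) => [->|v0]; first exact: sub0mx.
pose l := [set c *: v | c : F].
have ll : l \in lines F n by apply/imsetP; exists v; rewrite ?inE.
apply: (sumsmx_sup (Ordinal hk, l)); first by rewrite inE.
apply: (sumsmx_sup v); last by rewrite genmxE.
by apply/imsetP; exists 1; rewrite ?scale1r.
Qed.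

Theorem lemma3p2 (F : finFieldType) (n k : nat) (hk : (1 <= k)%N) :
  matroid_complex (@Delta_face F n k).
Proof.
split; [|split].
- apply/faceP; split; first exact: sub0set.
  by rewrite setD0; apply: Ev_full.
- move=> A B /faceP[sA fA] sBA; apply/faceP; split.
    exact: subset_trans sBA sA.
  move: fA; rewrite -!sub1mx => /submx_trans; apply.
  by apply: WV_mono; apply: setDS.
- move=> A B /faceP[sA fA] /faceP[sB fB] ltAB.
  pose X := Ev F n k :\: A.
  case: (boolP [exists v in B :\: A, row_full (WV (X :\ v))]).
    move=> /existsP[v /andP[vBA fv]]; exists v; split => //.
    apply/faceP; split.
      rewrite subUset sA andbT sub1set.
      by apply: (subsetP sB); move: vBA; rewrite inE => /andP[].
    suff -> : Ev F n k :\: (v |: A) = X :\ v by [].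
    by apply/setP => x; rewrite !inE negb_or andbA.
  rewrite negb_exists_in => /forall_inP H.
  have HD : forall v, v \in B :\: A -> (v \in X) && ~~ row_full (WV (X :\ v)).
    move=> v vBA; rewrite H // andbT.
    move: vBA; rewrite !inE => /andP[-> vB].
    by have := subsetP sB v vB; rewrite inE.
  have cnt := coloop_count fA HD.
  have sub : Ev F n k :\: B \subset (X :\: (B :\: A)) :|: (A :\: B).
    apply/subsetP => x; rewrite !inE.
    by case: (x \in A); case: (x \in B); case: (x.2 \in lines F n).
  have r1 : (\rank (WV (Ev F n k :\: B)) <= \rank (WV (X :\: (B :\: A))) + #|A :\: B|)%N.
    apply: leq_trans (WV_rankU _ _); first by apply: mxrankS; apply: WV_mono.
    by apply: subset_trans (subsetDl _ _) sA.
  have c1 := cardsID B A. have c2 := cardsID A B.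
  rewrite setIC in c2.
  move: fB; rewrite /row_full => /eqP fB.
  rewrite /X in r1; lia.
Qed.
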